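(* Let $\mu>0$ and let $\eta:\mathbb{R}^n\to\mathbb{R}^n$ be the element-wise symmetric clipping operator, $\eta(\boldsymbol{u})_j=-\mu$ if $u_j\le-\mu$, $\eta(\boldsymbol{u})_j=u_j$ if $u_j\in(-\mu,\mu)$, $\eta(\boldsymbol{u})_j=\mu$ if $u_j\ge\mu$. For any two cones $\mathcal{X},\mathcal{X}'\subseteq\mathbb{R}^n$ with $\mathcal{X}\neq\mathcal{X}'$, we have $\eta(\mathcal{X})\neq\eta(\mathcal{X}')$, where $\eta(\mathcal{X})=\{\eta(\boldsymbol{x}):\boldsymbol{x}\in\mathcal{X}\}$.
   Context: A set $\mathcal{X}\subseteq\mathbb{R}^n$ is a cone (scale invariant) if $g\mathcal{X}=\mathcal{X}$ for all $g\in\mathbb{R}^*_+=(0,\infty)$, where $g\mathcal{X}=\{g\boldsymbol{x}:\boldsymbol{x}\in\mathcal{X}\}$. *)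

(* Defs.v *)
From mathcomp Require Import all_boot all_order all_algebra.
From mathcomp Require Import boolp classical_sets reals.
Set Implicit Arguments. Unset Strict Implicit. Unset Printing Implicit Defensive.
Import Order.TTheory GRing.Theory Num.Theory.
Local Open Scope ring_scope.
Local Open Scope classical_set_scope.

Definition scale_set (R : realType) (n : nat) (g : R) (X : set 'rV[R]_n) :
  set 'rV[R]_n := [set g *: x | x in X].

Definition is_cone (R : realType) (n : nat) (X : set 'rV[R]_n) : Prop :=
  forall g : R, 0 < g -> scale_set g X = X.

Definition clip_scalar (R : realType) (mu t : R) : R :=
  if t <= - mu then - mu else if t < mu then t else mu.

Definition clip (R : realType) (n : nat) (mu : R) (u : 'rV[R]_n) : 'rV[R]_n :=
  \row_j clip_scalar mu (u ord0 j).

(* Main.v *)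
Require Import Defs.
From mathcomp Require Import all_boot all_order all_algebra.
From mathcomp Require Import boolp classical_sets reals.
Import Order.TTheory GRing.Theory Num.Theory.
Local Open Scope ring_scope.
Local Open Scope classical_set_scope.

Lemma clip_fix (R : realType) (mu t : R) : `|t| < mu -> clip_scalar mu t = t.
Proof.
rewrite ltr_norml => /andP[h1 h2]; rewrite /clip_scalar.
by rewrite leNgt h1 /= h2.
Qed.

Lemma clip_inv (R : realType) (mu t s : R) : `|s| < mu ->
  clip_scalar mu t = s -> t = s.
Proof.
rewrite ltr_norml => /andP[h1 h2]; rewrite /clip_scalar.
case: ifP => [_ e|_]; first by rewrite e ltxx in h1.
case: ifP => [_ //|_ e]; by rewrite e ltxx in h2.
Qed.

Lemma cone_sub (R : realType) (n : nat) (mu : R) (hmu : 0 < mu)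
  (X X' : set 'rV[R]_n) :
  is_cone X -> is_cone X' -> clip mu @` X = clip mu @` X' -> X `<=` X'.
Proof.
move=> cX cX' E x Xx.
set S := \sum_j `|x ord0 j|.
have S0 : 0 <= S by apply: sumr_ge0.
have S1 : 0 < 1 + S by rewrite (lt_le_trans ltr01) // lerDl.
set g := mu / (1 + S).
have g0 : 0 < g by rewrite divr_gt0.
have small j : `|g * x ord0 j| < mu.
  rewrite normrM gtr0_norm // /g mulrAC ltr_pdivrMr // ltr_pM2l //.
  apply: ltr_pwDl; first exact: ltr01.
  by rewrite /S (bigD1 j) //= lerDl sumr_ge0.
have gX : X (g *: x) by rewrite -(cX g g0); exists x.
have : (clip mu @` X') (g *: x).
  rewrite -E; exists (g *: x) => //.
  by apply/rowP => j; rewrite !mxE clip_fix.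
case=> x' X'x' ex'.
have ex : x' = g *: x.
  apply/rowP => j; have := congr1 (fun v : 'rV[R]_n => v ord0 j) ex'.
  rewrite !mxE /=; exact: clip_inv.
have -> : x = g^-1 *: (g *: x) by rewrite scalerA mulVf ?scale1r // gt_eqF.
by rewrite -(cX' g^-1) ?invr_gt0 //; exists (g *: x); rewrite -?ex.
Qed.

Theorem proposition2 (R : realType) (n : nat) (mu : R) (hmu : 0 < mu)
  (X X' : set 'rV[R]_n) :
  is_cone X -> is_cone X' -> X <> X' ->
  clip mu @` X <> clip mu @` X'.
Proof.
move=> cX cX' ne E; apply: ne. rewrite eqEsubset; split.
- exact: (@cone_sub R n mu hmu X X' cX cX' E).
- exact: (@cone_sub R n mu hmu X' X cX' cX (esym E)).
Qed.
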